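(* (1) $\mathsf{LKur}$ is strictly contained in $\mathsf{GKur}$. (2) $\mathsf{MGrz}\vee\mathsf{LKur}=\mathsf{MGrz}\vee\mathsf{GKur}$, where $\vee$ denotes the smallest extension of $\mathsf{MS4}$ containing both logics.
   Context: $\mathsf{MIPC}$ is the smallest set of formulas in the bimodal language $\mathcal{L}_{\forall\exists}$ containing all theorems of $\mathsf{IPC}$; $\forall(p\wedge q)\leftrightarrow(\forall p\wedge\forall q)$, $\forall p\to p$, $\forall p\to\forall\forall p$; $\exists(p\vee q)\leftrightarrow(\exists p\vee\exists q)$, $p\to\exists p$, $\exists\exists p\to\exists p$, $(\exists p\wedge\exists q)\to\exists(\exists p\wedge q)$; $\exists\forall p\to\forall p$, $\exists p\to\forall\exists p$; closed under modus ponens, substitution and $\varphi/\forall\varphi$. $\mathsf{Kur}=\mathsf{MIPC}+\forall\neg\neg p\to\neg\neg\forall p$. $\mathsf{MS4}$ is the smallest set of formulas in the classical bimodal language $\mathcal{L}_{\Box\forall}$ containing all classical tautologies, the $\mathsf{S4}$ axioms for $\Box$, the $\mathsf{S5}$ axioms for $\forall$, and $\Box\forall p\to\forall\Box p$, closed under modus ponens, substitution, $\Box$- and $\forall$-necessitation; $\Diamond=\neg\Box\neg$, $\exists=\neg\forall\neg$. $\mathsf{MGrz}=\mathsf{MS4}+\Box(\Box(p\to\Box p)\to p)\to p$; $\mathsf{LKur}=\mathsf{MS4}+\Box\forall\Diamond\Box p\to\Diamond\forall p$; $\mathsf{GKur}=\mathsf{MS4}+\{\varphi^t:\mathsf{Kur}\vdash\varphi\}$,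 with $(-)^t$ the Gödel translation: $\bot^t=\bot$, $p^t=\Box p$, $(\varphi\wedge\psi)^t=\varphi^t\wedge\psi^t$, $(\varphi\vee\psi)^t=\varphi^t\vee\psi^t$, $(\varphi\to\psi)^t=\Box(\neg\varphi^t\vee\psi^t)$, $(\forall\varphi)^t=\Box\forall\varphi^t$, $(\exists\varphi)^t=\exists\varphi^t$. *)

(* Defs.v *)
From Stdlib Require Import Bool.

Inductive iform : Type :=
| IVar : nat -> iform
| IBot : iform
| IAnd : iform -> iform -> iform
| IOr  : iform -> iform -> iform
| IImp : iform -> iform -> iform
| IAll : iform -> iform
| IEx  : iform -> iform.

Definition INeg (a : iform) : iform := IImp a IBot.
Definition IIff (a b : iform) : iform := IAnd (IImp a b) (IImp b a).

Fixpoint isubst (s : nat -> iform) (a : iform) : iform :=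
  match a with
  | IVar n => s n
  | IBot => IBot
  | IAnd x y => IAnd (isubst s x) (isubst s y)
  | IOr x y => IOr (isubst s x) (isubst s y)
  | IImp x y => IImp (isubst s x) (isubst s y)
  | IAll x => IAll (isubst s x)
  | IEx x => IEx (isubst s x)
  end.

Inductive ipc_axiom : iform -> Prop :=
| ipcK a b : ipc_axiom (IImp a (IImp b a))
| ipcS a b c : ipc_axiom (IImp (IImp a (IImp b c)) (IImp (IImp a b) (IImp a c)))
| ipcAndI a b : ipc_axiom (IImp a (IImp b (IAnd a b)))
| ipcAndE1 a b : ipc_axiom (IImp (IAnd a b) a)
| ipcAndE2 a b : ipc_axiom (IImp (IAnd a b) b)
| ipcOrI1 a b : ipc_axiom (IImp a (IOr a b))
| ipcOrI2 a b : ipc_axiom (IImp b (IOr a b))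
| ipcOrE a b c : ipc_axiom (IImp (IImp a c) (IImp (IImp b c) (IImp (IOr a b) c)))
| ipcBot a : ipc_axiom (IImp IBot a).

Definition ip : iform := IVar 0.
Definition iq : iform := IVar 1.

Inductive mipc_axiom : iform -> Prop :=
| mAllAnd : mipc_axiom (IIff (IAll (IAnd ip iq)) (IAnd (IAll ip) (IAll iq)))
| mAllT : mipc_axiom (IImp (IAll ip) ip)
| mAll4 : mipc_axiom (IImp (IAll ip) (IAll (IAll ip)))
| mExOr : mipc_axiom (IIff (IEx (IOr ip iq)) (IOr (IEx ip) (IEx iq)))
| mExT : mipc_axiom (IImp ip (IEx ip))
| mEx4 : mipc_axiom (IImp (IEx (IEx ip)) (IEx ip))
| mExAnd : mipc_axiom (IImp (IAnd (IEx ip) (IEx iq)) (IEx (IAnd (IEx ip) iq)))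
| mExAll : mipc_axiom (IImp (IEx (IAll ip)) (IAll ip))
| mExAllEx : mipc_axiom (IImp (IEx ip) (IAll (IEx ip))).

Inductive mipc_ext (G : iform -> Prop) : iform -> Prop :=
| mi_ipc a : ipc_axiom a -> mipc_ext G a
| mi_ax a : mipc_axiom a -> mipc_ext G a
| mi_extra a : G a -> mipc_ext G a
| mi_mp a b : mipc_ext G (IImp a b) -> mipc_ext G a -> mipc_ext G b
| mi_subst s a : mipc_ext G a -> mipc_ext G (isubst s a)
| mi_nec a : mipc_ext G a -> mipc_ext G (IAll a).

Definition MIPC : iform -> Prop := mipc_ext (fun _ => False).

Definition kur_axiom : iform :=
  IImp (IAll (INeg (INeg ip))) (INeg (INeg (IAll ip))).

Definition Kur : iform -> Prop := mipc_ext (fun a => a = kur_axiom).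

Inductive cform : Type :=
| CVar : nat -> cform
| CBot : cform
| CAnd : cform -> cform -> cform
| COr  : cform -> cform -> cform
| CImp : cform -> cform -> cform
| CBox : cform -> cform
| CAll : cform -> cform.

Definition CNeg (a : cform) : cform := CImp a CBot.
Definition CDia (a : cform) : cform := CNeg (CBox (CNeg a)).
Definition CEx (a : cform) : cform := CNeg (CAll (CNeg a)).

Fixpoint csubst (s : nat -> cform) (a : cform) : cform :=
  match a with
  | CVar n => s n
  | CBot => CBot
  | CAnd x y => CAnd (csubst s x) (csubst s y)
  | COr x y => COr (csubst s x) (csubst s y)
  | CImp x y => CImp (csubst s x) (csubst s y)
  | CBox x => CBox (csubst s x)
  | CAll x => CAll (csubst s x)
  end.

(* Classical truth-table evaluation, treating variables and modalized
   subformulas (Box _, All _) as propositional atoms. *)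
Fixpoint ceval (v : cform -> bool) (a : cform) : bool :=
  match a with
  | CVar n => v (CVar n)
  | CBot => false
  | CAnd x y => ceval v x && ceval v y
  | COr x y => ceval v x || ceval v y
  | CImp x y => implb (ceval v x) (ceval v y)
  | CBox x => v (CBox x)
  | CAll x => v (CAll x)
  end.

Definition tautology (a : cform) : Prop := forall v, ceval v a = true.

Definition cp : cform := CVar 0.
Definition cq : cform := CVar 1.

Inductive ms4_axiom : cform -> Prop :=
| sBoxK : ms4_axiom (CImp (CBox (CImp cp cq)) (CImp (CBox cp) (CBox cq)))
| sBoxT : ms4_axiom (CImp (CBox cp) cp)
| sBox4 : ms4_axiom (CImp (CBox cp) (CBox (CBox cp)))
| sAllK : ms4_axiom (CImp (CAll (CImp cp cq)) (CImp (CAll cp) (CAll cq)))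
| sAllT : ms4_axiom (CImp (CAll cp) cp)
| sAll4 : ms4_axiom (CImp (CAll cp) (CAll (CAll cp)))
| sAll5 : ms4_axiom (CImp (CEx cp) (CAll (CEx cp)))
| sLC : ms4_axiom (CImp (CBox (CAll cp)) (CAll (CBox cp))).

Inductive ms4_ext (G : cform -> Prop) : cform -> Prop :=
| ms_taut a : tautology a -> ms4_ext G a
| ms_ax a : ms4_axiom a -> ms4_ext G a
| ms_extra a : G a -> ms4_ext G a
| ms_mp a b : ms4_ext G (CImp a b) -> ms4_ext G a -> ms4_ext G b
| ms_subst s a : ms4_ext G a -> ms4_ext G (csubst s a)
| ms_necBox a : ms4_ext G a -> ms4_ext G (CBox a)
| ms_necAll a : ms4_ext G a -> ms4_ext G (CAll a).

Definition MS4 : cform -> Prop := ms4_ext (fun _ => False).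

Definition grz_axiom : cform :=
  CImp (CBox (CImp (CBox (CImp cp (CBox cp))) cp)) cp.
Definition MGrz : cform -> Prop := ms4_ext (fun a => a = grz_axiom).

Definition lkur_axiom : cform :=
  CImp (CBox (CAll (CDia (CBox cp)))) (CDia (CAll cp)).
Definition LKur : cform -> Prop := ms4_ext (fun a => a = lkur_axiom).

Fixpoint gtr (a : iform) : cform :=
  match a with
  | IVar n => CBox (CVar n)
  | IBot => CBot
  | IAnd x y => CAnd (gtr x) (gtr y)
  | IOr x y => COr (gtr x) (gtr y)
  | IImp x y => CBox (COr (CNeg (gtr x)) (gtr y))
  | IAll x => CBox (CAll (gtr x))
  | IEx x => CEx (gtr x)
  end.

Definition GKur : cform -> Prop :=
  ms4_ext (fun a => exists b, Kur b /\ a = gtr b).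

Definition join (L1 L2 : cform -> Prop) : cform -> Prop :=
  ms4_ext (fun a => L1 a \/ L2 a).

(* Main.v *)
Require Import Defs.
From Stdlib Require Import Bool.

Definition gimp A B := CBox (COr (CNeg A) B).
Ltac taut := try apply ms_taut; let v := fresh "v" in intro v; cbv [CDia CEx CNeg gimp cp cq tautology] in *; cbn [ceval];
  repeat (match goal with
          | |- context [ceval v ?x] => destruct (ceval v x)
          | |- context [v ?x] => destruct (v x) end); reflexivity.

Lemma tmp1 {G} a b : ms4_ext G a -> tautology (CImp a b) -> ms4_ext G b.
Proof. intros H T. exact (ms_mp _ _ _ (ms_taut _ _ T) H). Qed.
Lemma tmp2 {G} a b c : ms4_ext G a -> ms4_ext G b -> tautology (CImp a (CImp b c)) -> ms4_ext G c.
Proof. intros H1 H2 T. exact (ms_mp _ _ _ (ms_mp _ _ _ (ms_taut _ _ T) H1) H2). Qed.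
Lemma tmp3 {G} a b c d : ms4_ext G a -> ms4_ext G b -> ms4_ext G c ->
  tautology (CImp a (CImp b (CImp c d))) -> ms4_ext G d.
Proof. intros H1 H2 H3 T. exact (ms_mp _ _ _ (ms_mp _ _ _ (ms_mp _ _ _ (ms_taut _ _ T) H1) H2) H3). Qed.

Definition s2 (a b : cform) (n : nat) : cform :=
  match n with 0 => a | 1 => b | _ => CVar n end.

Lemma boxK {G} a b : ms4_ext G (CImp (CBox (CImp a b)) (CImp (CBox a) (CBox b))).
Proof. exact (ms_subst _ (s2 a b) _ (ms_ax _ _ sBoxK)). Qed.
Lemma boxT {G} a : ms4_ext G (CImp (CBox a) a).
Proof. exact (ms_subst _ (s2 a a) _ (ms_ax _ _ sBoxT)). Qed.
Lemma box4 {G} a : ms4_ext G (CImp (CBox a) (CBox (CBox a))).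
Proof. exact (ms_subst _ (s2 a a) _ (ms_ax _ _ sBox4)). Qed.
Lemma allK {G} a b : ms4_ext G (CImp (CAll (CImp a b)) (CImp (CAll a) (CAll b))).
Proof. exact (ms_subst _ (s2 a b) _ (ms_ax _ _ sAllK)). Qed.
Lemma allT {G} a : ms4_ext G (CImp (CAll a) a).
Proof. exact (ms_subst _ (s2 a a) _ (ms_ax _ _ sAllT)). Qed.
Lemma all4 {G} a : ms4_ext G (CImp (CAll a) (CAll (CAll a))).
Proof. exact (ms_subst _ (s2 a a) _ (ms_ax _ _ sAll4)). Qed.
Lemma all5 {G} a : ms4_ext G (CImp (CEx a) (CAll (CEx a))).
Proof. exact (ms_subst _ (s2 a a) _ (ms_ax _ _ sAll5)). Qed.
Lemma LC {G} a : ms4_ext G (CImp (CBox (CAll a)) (CAll (CBox a))).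
Proof. exact (ms_subst _ (s2 a a) _ (ms_ax _ _ sLC)). Qed.

Lemma trans {G} a b c : ms4_ext G (CImp a b) -> ms4_ext G (CImp b c) -> ms4_ext G (CImp a c).
Proof. intros H1 H2; apply (tmp2 _ _ _ H1 H2); taut. Qed.

Lemma box_mono {G} a b : ms4_ext G (CImp a b) -> ms4_ext G (CImp (CBox a) (CBox b)).
Proof. intros H. exact (ms_mp _ _ _ (boxK a b) (ms_necBox _ _ H)). Qed.
Lemma all_mono {G} a b : ms4_ext G (CImp a b) -> ms4_ext G (CImp (CAll a) (CAll b)).
Proof. intros H. exact (ms_mp _ _ _ (allK a b) (ms_necAll _ _ H)). Qed.

Lemma contra {G} a b : ms4_ext G (CImp a b) -> ms4_ext G (CImp (CNeg b) (CNeg a)).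
Proof. intros H; apply (tmp1 _ _ H); taut. Qed.

Lemma dia_mono {G} a b : ms4_ext G (CImp a b) -> ms4_ext G (CImp (CDia a) (CDia b)).
Proof. intros H. apply contra, box_mono, contra, H. Qed.
Lemma ex_mono {G} a b : ms4_ext G (CImp a b) -> ms4_ext G (CImp (CEx a) (CEx b)).
Proof. intros H. apply contra, all_mono, contra, H. Qed.

Lemma box_and {G} a b : ms4_ext G (CImp (CAnd (CBox a) (CBox b)) (CBox (CAnd a b))).
Proof.
  assert (H1 : ms4_ext G (CImp (CBox a) (CBox (CImp b (CAnd a b))))) by (apply box_mono; taut).
  apply (tmp2 _ _ _ H1 (boxK b (CAnd a b))); taut.
Qed.
Lemma all_and {G} a b : ms4_ext G (CImp (CAnd (CAll a) (CAll b)) (CAll (CAnd a b))).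
Proof.
  assert (H1 : ms4_ext G (CImp (CAll a) (CAll (CImp b (CAnd a b))))) by (apply all_mono; taut).
  apply (tmp2 _ _ _ H1 (allK b (CAnd a b))); taut.
Qed.
Lemma tmp4 {G} a b c d e : ms4_ext G a -> ms4_ext G b -> ms4_ext G c -> ms4_ext G d ->
  tautology (CImp a (CImp b (CImp c (CImp d e)))) -> ms4_ext G e.
Proof. intros H1 H2 H3 H4 T. exact (ms_mp _ _ _ (ms_mp _ _ _ (ms_mp _ _ _ (ms_mp _ _ _ (ms_taut _ _ T) H1) H2) H3) H4). Qed.

Lemma all_B {G} a : ms4_ext G (CImp a (CAll (CEx a))).
Proof. apply (tmp2 _ _ _ (allT (CNeg a)) (all5 a)); taut. Qed.

Lemma ex_all_T {G} a : ms4_ext G (CImp (CEx (CAll a)) a).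
Proof.
  pose proof (all_B (G:=G) (CNeg a)) as H.
  assert (H2 : ms4_ext G (CImp (CEx (CNeg a)) (CNeg (CAll a)))).
  { apply contra. assert (T : ms4_ext G (CImp a (CNeg (CNeg a)))) by taut.
    apply (trans _ _ _ (all_mono _ _ T)). apply ms_taut; taut. }
  pose proof (all_mono _ _ H2) as H3.
  apply (tmp2 _ _ _ H H3). taut.
Qed.

Lemma LC_dual {G} a : ms4_ext G (CImp (CEx (CDia a)) (CDia (CEx a))).
Proof.
  apply contra.
  apply (trans _ (CBox (CAll (CNeg a)))). { apply box_mono; taut. }
  apply (trans _ _ _ (LC _)). apply all_mono; taut.
Qed.

Lemma dia_all_comm {G} a : ms4_ext G (CImp (CDia (CAll a)) (CAll (CDia a))).
Proof.
  apply (trans _ _ _ (all_B _)). apply all_mono.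
  apply (trans _ _ _ (LC_dual _)). apply dia_mono, ex_all_T.
Qed.

Lemma ex_pers {G} X : ms4_ext G (CImp X (CBox X)) -> ms4_ext G (CImp (CEx X) (CBox (CEx X))).
Proof.
  intros HX.
  pose proof (dia_all_comm (G:=G) (CNeg X)) as H.
  assert (H1 : ms4_ext G (CImp (CDia (CNeg X)) (CNeg X))).
  { assert (H2 : ms4_ext G (CImp (CBox X) (CBox (CNeg (CNeg X))))) by (apply box_mono; taut).
    apply (tmp2 _ _ _ HX H2); taut. }
  pose proof (all_mono _ _ H1) as H3.
  apply (tmp2 _ _ _ H H3); taut.
Qed.

Lemma box_all_box {G} a : ms4_ext G (CImp (CBox (CAll a)) (CBox (CAll (CBox a)))).
Proof. apply (trans _ _ _ (box4 _)). apply box_mono, LC. Qed.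

Lemma box_all_4 {G} a : ms4_ext G (CImp (CBox (CAll a)) (CBox (CAll (CBox (CAll a))))).
Proof.
  apply (trans _ _ _ (box4 _)). apply box_mono.
  apply (trans _ _ _ (box_mono _ _ (all4 _))). apply LC.
Qed.

Lemma ex_box_all {G} a : ms4_ext G (CImp (CEx (CBox (CAll a))) (CBox (CAll a))).
Proof.
  apply (trans _ _ _ (ex_mono _ _ (box_mono _ _ (all4 _)))).
  apply (trans _ _ _ (ex_mono _ _ (LC _))). apply ex_all_T.
Qed.

Lemma pers_and {G} a b : ms4_ext G (CImp a (CBox a)) -> ms4_ext G (CImp b (CBox b)) ->
  ms4_ext G (CImp (CAnd a b) (CBox (CAnd a b))).
Proof. intros Ha Hb. apply (tmp3 _ _ _ _ Ha Hb (box_and a b)); taut. Qed.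

Lemma gtr_pers {G} a : ms4_ext G (CImp (gtr a) (CBox (gtr a))).
Proof.
  induction a; simpl.
  - apply box4.
  - taut.
  - apply pers_and; assumption.
  - assert (H1 : ms4_ext G (CImp (CBox (gtr a1)) (CBox (COr (gtr a1) (gtr a2))))) by (apply box_mono; taut).
    assert (H2 : ms4_ext G (CImp (CBox (gtr a2)) (CBox (COr (gtr a1) (gtr a2))))) by (apply box_mono; taut).
    apply (tmp4 _ _ _ _ _ IHa1 IHa2 H1 H2); taut.
  - apply box4.
  - apply box4.
  - apply ex_pers, IHa.
Qed.

Lemma intro_top {G} A B : ms4_ext G (CImp A B) -> ms4_ext G (gimp A B).
Proof. intros H. apply ms_necBox. apply (tmp1 _ _ H); taut. Qed.

Lemma intro_ctx {G} X A B : ms4_ext G (CImp X (CBox X)) -> ms4_ext G (CImp (CAnd X A) B) ->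
  ms4_ext G (CImp X (gimp A B)).
Proof.
  intros HX H. apply (trans _ _ _ HX). apply box_mono. apply (tmp1 _ _ H); taut.
Qed.

Lemma elim_imp {G} A B : ms4_ext G (CImp (CAnd (gimp A B) A) B).
Proof. apply (tmp1 _ _ (boxT (COr (CNeg A) B))). unfold gimp; taut. Qed.

Lemma gimp_pers {G} A B : ms4_ext G (CImp (gimp A B) (CBox (gimp A B))).
Proof. apply box4. Qed.

Lemma ipc_sound {G} a : ipc_axiom a -> ms4_ext G (gtr a).
Proof.
  intros H; destruct H; simpl; apply intro_top.
  - apply intro_ctx. apply gtr_pers. taut.
  - apply intro_ctx. apply gimp_pers.
    apply intro_ctx. apply pers_and; apply gimp_pers.
    pose proof (elim_imp (G:=G) (gtr a) (gimp (gtr b) (gtr c))) as E1.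
    pose proof (elim_imp (G:=G) (gtr a) (gtr b)) as E2.
    pose proof (elim_imp (G:=G) (gtr b) (gtr c)) as E3.
    apply (tmp3 _ _ _ _ E1 E2 E3). taut.
  - apply intro_ctx. apply gtr_pers. taut.
  - taut.
  - taut.
  - taut.
  - taut.
  - apply intro_ctx. apply gimp_pers.
    apply intro_ctx. apply pers_and; apply gimp_pers.
    pose proof (elim_imp (G:=G) (gtr a) (gtr c)) as E1.
    pose proof (elim_imp (G:=G) (gtr b) (gtr c)) as E2.
    apply (tmp2 _ _ _ E1 E2). taut.
  - taut.
Qed.

Lemma subst_eqv {G} (s : nat -> iform) a :
  ms4_ext G (CImp (gtr (isubst s a)) (csubst (fun n => gtr (s n)) (gtr a))) /\
  ms4_ext G (CImp (csubst (fun n => gtr (s n)) (gtr a)) (gtr (isubst s a))).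
Proof.
  induction a as [n| |a1 [H1 H1'] a2 [H2 H2']|a1 [H1 H1'] a2 [H2 H2']|a1 [H1 H1'] a2 [H2 H2']|a1 [H1 H1']|a1 [H1 H1']]; simpl.
  - split. apply gtr_pers. apply boxT.
  - split; taut.
  - split; [apply (tmp2 _ _ _ H1 H2) | apply (tmp2 _ _ _ H1' H2')]; taut.
  - split; [apply (tmp2 _ _ _ H1 H2) | apply (tmp2 _ _ _ H1' H2')]; taut.
  - split; apply box_mono; [apply (tmp2 _ _ _ H1' H2) | apply (tmp2 _ _ _ H1 H2')]; taut.
  - split; apply box_mono, all_mono; assumption.
  - split; [apply (ex_mono _ _ H1) | apply (ex_mono _ _ H1')].
Qed.

Definition P0 := CBox cp.
Definition Q0 := CBox cq.

Lemma iff_top {G} A B : ms4_ext G (CImp A B) -> ms4_ext G (CImp B A) ->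
  ms4_ext G (CAnd (gimp A B) (gimp B A)).
Proof. intros H1 H2. apply (tmp2 _ _ _ (intro_top _ _ H1) (intro_top _ _ H2)); taut. Qed.

Lemma ex_or {G} a b : ms4_ext G (CImp (CEx (COr a b)) (COr (CEx a) (CEx b))).
Proof.
  assert (H : ms4_ext G (CImp (CAnd (CAll (CNeg a)) (CAll (CNeg b))) (CAll (CNeg (COr a b))))).
  { apply (trans _ _ _ (all_and _ _)). apply all_mono; taut. }
  apply (tmp1 _ _ H); taut.
Qed.

Lemma all_ex_and {G} a b : ms4_ext G (CImp (CAnd (CAll a) (CEx b)) (CEx (CAnd a b))).
Proof.
  assert (H : ms4_ext G (CImp (CAnd (CAll a) (CAll (CNeg (CAnd a b)))) (CAll (CNeg b)))).
  { apply (trans _ _ _ (all_and _ _)). apply all_mono; taut. }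
  apply (tmp1 _ _ H); taut.
Qed.

Lemma mipc_sound {G} a : mipc_axiom a -> ms4_ext G (gtr a).
Proof.
  intros H; destruct H; simpl.
  - apply iff_top.
    + assert (H1 : ms4_ext G (CImp (CBox (CAll (CAnd (CBox cp) (CBox cq)))) (CBox (CAll (CBox cp)))))
        by (apply box_mono, all_mono; taut).
      assert (H2 : ms4_ext G (CImp (CBox (CAll (CAnd (CBox cp) (CBox cq)))) (CBox (CAll (CBox cq)))))
        by (apply box_mono, all_mono; taut).
      apply (tmp2 _ _ _ H1 H2); taut.
    + apply (trans _ _ _ (box_and _ _)). apply box_mono, all_and.
  - apply intro_top. apply (trans _ _ _ (boxT _)). apply allT.
  - apply intro_top. apply box_all_4.
  - apply iff_top.
    + apply ex_or.
    + assert (H1 : ms4_ext G (CImp (CEx (CBox cp)) (CEx (COr (CBox cp) (CBox cq))))) by (apply ex_mono; taut).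
      assert (H2 : ms4_ext G (CImp (CEx (CBox cq)) (CEx (COr (CBox cp) (CBox cq))))) by (apply ex_mono; taut).
      apply (tmp2 _ _ _ H1 H2); taut.
  - apply intro_top. apply (tmp1 _ _ (allT (CNeg (CBox cp)))); taut.
  - apply intro_top. apply contra.
    apply (trans _ _ _ (all4 _)). apply all_mono; taut.
  - apply intro_top.
    apply (tmp2 _ _ _ (all5 (CBox cp)) (all_ex_and (CEx (CBox cp)) (CBox cq))); taut.
  - apply intro_top. apply ex_box_all.
  - apply intro_top.
    apply (trans _ _ _ (ex_pers _ (box4 cp))). apply box_mono, all5.
Qed.

Lemma kur_trans {G} : ms4_ext G (gtr kur_axiom) -> forall b, Kur b -> ms4_ext G (gtr b).
Proof.
  intros HK b Hb. induction Hb.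
  - apply ipc_sound; assumption.
  - apply mipc_sound; assumption.
  - subst; assumption.
  - simpl in IHHb1. apply (tmp2 _ _ _ (ms_mp _ _ _ (boxT _) IHHb1) IHHb2); taut.
  - destruct (subst_eqv (G:=G) s a) as [_ H2].
    exact (ms_mp _ _ _ H2 (ms_subst _ _ _ IHHb)).
  - simpl. apply ms_necBox, ms_necAll, IHHb.
Qed.

Lemma mckinsey {G} X : ms4_ext G grz_axiom ->
  ms4_ext G (CImp (CBox (CDia X)) (CDia (CBox X))).
Proof.
  intros Hgrz.
  set (W := CImp (CNeg X) (CBox (CNeg X))).
  set (Z := CImp (CBox W) (CNeg X)).
  assert (Hg : ms4_ext G (CImp (CBox Z) (CNeg X))) by exact (ms_subst _ (s2 (CNeg X) (CNeg X)) _ Hgrz).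
  assert (Hb : ms4_ext G (CImp (CDia X) (CNeg (CBox Z)))).
  { apply (tmp2 _ _ _ (box_mono _ _ Hg) (box4 Z)). subst W Z; taut. }
  assert (Hc : ms4_ext G (CImp (CAnd (CBox W) (CBox (CDia X))) (CBox X))).
  { apply (trans _ _ _ (box_and _ _)). apply box_mono. subst W; taut. }
  assert (Hd : ms4_ext G (CImp (CAnd (CBox (CDia X)) (CNeg (CBox X))) Z)).
  { apply (tmp1 _ _ Hc). subst W Z; taut. }
  pose proof (box_mono _ _ Hd) as He.
  assert (He2 : ms4_ext G (CImp (CAnd (CBox (CDia X)) (CBox (CNeg (CBox X)))) (CBox Z))).
  { apply (tmp3 _ _ _ _ (box4 (CDia X)) (box_and (CBox (CDia X)) (CNeg (CBox X))) He). subst W Z; taut. }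
  apply (tmp3 _ _ _ _ (boxT (CDia X)) Hb He2). subst W Z; taut.
Qed.

Lemma ms4_mono (G H : cform -> Prop) : (forall a, G a -> ms4_ext H a) ->
  forall a, ms4_ext G a -> ms4_ext H a.
Proof.
  intros HGH a Ha. induction Ha.
  - apply ms_taut; assumption.
  - apply ms_ax; assumption.
  - apply HGH; assumption.
  - eapply ms_mp; eassumption.
  - apply ms_subst; assumption.
  - apply ms_necBox; assumption.
  - apply ms_necAll; assumption.
Qed.

Definition s1 (a : cform) (n : nat) : cform := match n with 0 => a | _ => CVar n end.

Lemma kurt_from_grz_lkur {G} : ms4_ext G grz_axiom -> ms4_ext G lkur_axiom ->
  ms4_ext G (gtr kur_axiom).
Proof.
  intros Hgrz Hl.
  set (P := CBox cp).
  set (NN := gimp (gimp P CBot) CBot).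
  set (B := CBox (CAll NN)).
  assert (Hl2 : ms4_ext G (CImp (CBox (CAll (CDia (CBox P)))) (CDia (CAll P))))
    by exact (ms_subst _ (s1 P) _ Hl).
  change (ms4_ext G (gimp B (gimp (gimp (CBox (CAll P)) CBot) CBot))).
  apply intro_top.
  assert (H1 : ms4_ext G (CImp NN (CDia (CBox P)))).
  { apply (trans _ (CDia P)).
    - assert (T : ms4_ext G (CImp (CNeg P) (COr (CNeg P) CBot))) by taut.
      apply (tmp2 _ _ _ (boxT (COr (CNeg (gimp P CBot)) CBot)) (box_mono _ _ T)).
      subst NN P; taut.
    - apply dia_mono, box4. }
  assert (H2 : ms4_ext G (CImp B (CDia (CAll P)))).
  { apply (trans _ _ _ (box_mono _ _ (all_mono _ _ H1))). exact Hl2. }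
  assert (H3 : ms4_ext G (CImp B (CDia (CBox (CAll P))))).
  { apply (trans _ _ _ (box4 _)). apply (trans _ _ _ (box_mono _ _ H2)). apply mckinsey, Hgrz. }
  apply (trans _ _ _ (box4 _)). apply box_mono.
  apply (trans _ _ _ H3).
  assert (T : ms4_ext G (CImp (COr (CNeg (CBox (CAll P))) CBot) (CNeg (CBox (CAll P))))) by taut.
  apply (tmp1 _ _ (box_mono _ _ T)). subst P; taut.
Qed.

Lemma lkur_from_kurt {G} : ms4_ext G (gtr kur_axiom) -> ms4_ext G lkur_axiom.
Proof.
  intros HK.
  set (P := CBox cp).
  set (NN := gimp (gimp P CBot) CBot).
  set (B := CBox (CAll NN)).
  set (C := gimp (gimp (CBox (CAll P)) CBot) CBot).
  assert (HBC : ms4_ext G (CImp B C)).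
  { apply (tmp1 _ _ (ms_mp _ _ _ (boxT _) HK)). subst B C NN P; simpl; taut. }
  assert (H1 : ms4_ext G (CImp (CBox (CDia P)) NN)).
  { apply box_mono. assert (T : ms4_ext G (CImp (COr (CNeg P) CBot) (CNeg P))) by taut.
    apply (tmp1 _ _ (box_mono _ _ T)). subst NN P; taut. }
  assert (H2 : ms4_ext G (CImp (CBox (CAll (CDia P))) B)).
  { apply (trans _ _ _ (box_all_box _)). apply box_mono, all_mono, H1. }
  assert (H3 : ms4_ext G (CImp (CBox (CAll P)) (CAll cp))).
  { apply (trans _ _ _ (boxT _)). apply all_mono, boxT. }
  assert (H4 : ms4_ext G (CImp (CNeg (CAll cp)) (COr (CNeg (CBox (CAll P))) CBot))).
  { apply (tmp1 _ _ H3). subst P; taut. }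
  pose proof (box_mono _ _ H4) as H5.
  unfold lkur_axiom.
  apply (trans _ _ _ H2). apply (trans _ _ _ HBC).
  apply (tmp2 _ _ _ (boxT (COr (CNeg (gimp (CBox (CAll P)) CBot)) CBot)) H5). subst C P; taut.
Qed.

Inductive W := WD | WC1 | WC2.
Definition Rw (w u : W) : bool :=
  match w, u with
  | WD, _ => true
  | _, WD => false
  | _, _ => true
  end.
Definition Ew (w u : W) : bool :=
  match w, u with
  | WC1, WC1 => true
  | WC1, _ => false
  | _, WC1 => false
  | _, _ => true
  end.

Fixpoint sat (V : nat -> W -> bool) (a : cform) (w : W) : bool :=
  match a with
  | CVar n => V n w
  | CBot => false
  | CAnd x y => sat V x w && sat V y w
  | COr x y => sat V x w || sat V y w
  | CImp x y => implb (sat V x w) (sat V y w)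
  | CBox x => implb (Rw w WD) (sat V x WD) && implb (Rw w WC1) (sat V x WC1)
              && implb (Rw w WC2) (sat V x WC2)
  | CAll x => implb (Ew w WD) (sat V x WD) && implb (Ew w WC1) (sat V x WC1)
              && implb (Ew w WC2) (sat V x WC2)
  end.

Lemma ceval_sat V a w : ceval (fun b => sat V b w) a = sat V a w.
Proof. induction a; simpl; try rewrite IHa1, IHa2; reflexivity. Qed.

Lemma sat_subst V s a w : sat V (csubst s a) w = sat (fun n u => sat V (s n) u) a w.
Proof. revert w; induction a; intros w; simpl; try rewrite IHa1, IHa2; try rewrite !IHa; reflexivity. Qed.

Lemma sound a : ms4_ext (fun a => a = lkur_axiom) a -> forall V w, sat V a w = true.
Proof.
  intros H. induction H; intros V w.
  - rewrite <- ceval_sat. apply H.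
  - destruct H; unfold cp, cq; destruct w; simpl;
    destruct (V 0 WD), (V 0 WC1), (V 0 WC2), (V 1 WD), (V 1 WC1), (V 1 WC2); reflexivity.
  - subst. unfold lkur_axiom, cp; destruct w; simpl;
    destruct (V 0 WD), (V 0 WC1), (V 0 WC2); reflexivity.
  - specialize (IHms4_ext1 V w); specialize (IHms4_ext2 V w); simpl in IHms4_ext1.
    rewrite IHms4_ext2 in IHms4_ext1. exact IHms4_ext1.
  - rewrite sat_subst. apply IHms4_ext.
  - simpl. rewrite !IHms4_ext. destruct (Rw w WD), (Rw w WC1), (Rw w WC2); reflexivity.
  - simpl. rewrite !IHms4_ext. destruct (Ew w WD), (Ew w WC1), (Ew w WC2); reflexivity.
Qed.

Lemma not_lkur : ~ LKur (gtr kur_axiom).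
Proof.
  intros H. pose proof (sound _ H (fun _ w => match w with WD => false | _ => true end) WC2) as H2.
  vm_compute in H2. discriminate.
Qed.

Lemma kurt_in_GKur : GKur (gtr kur_axiom).
Proof. apply ms_extra. exists kur_axiom. split; [apply mi_extra; reflexivity | reflexivity]. Qed.

Lemma LKur_GKur a : LKur a -> GKur a.
Proof.
  apply ms4_mono. intros b Hb; subst. apply lkur_from_kurt. apply kurt_in_GKur.
Qed.

Theorem proposition4p14 :
  ((forall a, LKur a -> GKur a) /\ (exists a, GKur a /\ ~ LKur a)) /\
  (forall a, join MGrz LKur a <-> join MGrz GKur a).
Proof.
  split; [split|].
  - exact LKur_GKur.
  - exists (gtr kur_axiom). split; [apply kurt_in_GKur | apply not_lkur].
  - intros a; split; apply ms4_mono.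
    + intros b [Hb|Hb]; apply ms_extra; [left; exact Hb | right; apply LKur_GKur, Hb].
    + intros b [Hb|Hb]; [apply ms_extra; left; exact Hb|].
      revert b Hb. apply ms4_mono. intros b [c [Hc ->]].
      apply kur_trans; [|exact Hc].
      apply kurt_from_grz_lkur.
      * apply ms_extra. left. apply ms_extra. reflexivity.
      * apply ms_extra. right. apply ms_extra. reflexivity.
Qed.
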